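(* Let $b,c:\mathbb{R}\to[0,\infty)$ be continuous, let $t_0\in\mathbb{R}$, $x_0>0$, $y_0>0$, $z_0\ge 0$, and put $N=x_0+y_0+z_0$ and $\kappa=\frac{y_0}{x_0}$. Consider the system $$x'=-\frac{b(t)xy}{x+y},\qquad y'=\frac{b(t)xy}{x+y}-c(t)y,\qquad z'=c(t)y,$$ with $x,y>0$ and $x(t_0)=x_0$, $y(t_0)=y_0$, $z(t_0)=z_0$. Then the solution is given by $$x(t)=x_0\exp\left\{-\kappa\int_{t_0}^t b(s)\left(\kappa+e^{\int_{t_0}^s (c-b)(\tau)\,d\tau}\right)^{-1}ds\right\},$$ $$y(t)=y_0\exp\left\{\int_{t_0}^t\left[b(s)\left(1+\kappa e^{\int_{t_0}^s (b-c)(\tau)\,d\tau}\right)^{-1}-c(s)\right]ds\right\},$$ $$z(t)=N-\left(y_0e^{\int_{t_0}^t (b-c)(s)\,ds}+x_0\right)\exp\left\{-\kappa\int_{t_0}^t b(s)\left(\kappa+e^{\int_{t_0}^s (c-b)(\tau)\,d\tau}\right)^{-1}ds\right\}.$$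
   Context: $x$, $y$, $z$ denote the susceptible, infected and removed populations, respectively, as functions of real time $t$. *)

(* Defs.v *)
From Stdlib Require Import Reals.
From Coquelicot Require Export Coquelicot.
Open Scope R_scope.

(* Main.v *)
Require Import Defs.
From Stdlib Require Import Reals Lra.
From Coquelicot Require Import Coquelicot.
Open Scope R_scope.

Lemma const0 (f : R -> R) : (forall t, is_derive f t 0) -> forall a b, f b = f a.
Proof.
  intros H a b.
  destruct (MVT_gen f a b (fun _ => 0)) as [c [_ Hc]].
  - intros; apply H.
  - intros; apply continuity_pt_filterlim; apply (ex_derive_continuous f); eexists; apply H.
  - lra.
Qed.

Lemma deriv_int (f : R -> R) a : (forall t, continuous f t) ->
  forall t, is_derive (fun t => RInt f a t) t (f t).
Proof.
  intros Hf t. apply (is_derive_RInt f (fun t => RInt f a t) a); [|apply Hf].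
  apply filter_forall. intros u. apply (RInt_correct f); apply (ex_RInt_continuous f).
  intros; apply Hf.
Qed.

Lemma dmult f g x df dg : is_derive f x df -> is_derive g x dg ->
  is_derive (fun t => f t * g t) x (df * g x + f x * dg).
Proof. intros; apply (is_derive_mult f g); auto. intros; apply Rmult_comm. Qed.

Lemma dexp f x df : is_derive f x df -> is_derive (fun t => exp (f t)) x (df * exp (f x)).
Proof. intros H. apply (is_derive_comp exp f); auto. apply is_derive_exp. Qed.

Lemma cminus (f g : R -> R) x : continuous f x -> continuous g x -> continuous (fun t => f t - g t) x.
Proof. intros; apply (continuous_minus f g); auto. Qed.

Lemma cmult (f g : R -> R) x : continuous f x -> continuous g x -> continuous (fun t => f t * g t) x.
Proof. intros; apply (continuous_mult f g); auto. Qed.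

Lemma cplus (f g : R -> R) x : continuous f x -> continuous g x -> continuous (fun t => f t + g t) x.
Proof. intros; apply (continuous_plus f g); auto. Qed.

Lemma ccst (k : R) x : continuous (fun _ : R => k) x.
Proof. apply continuous_const. Qed.

Lemma dcont (f : R -> R) (x df : R) : is_derive f x df -> continuous f x.
Proof. intros H; apply (ex_derive_continuous f); eexists; apply H. Qed.

Lemma dreplace (f : R -> R) (x l l' : R) : is_derive f x l -> l = l' -> is_derive f x l'.
Proof. intros H <-; exact H. Qed.

Theorem mainTheorem1
  (b c : R -> R)
  (hb_cont : forall t, continuous b t) (hc_cont : forall t, continuous c t)
  (hb_nn : forall t, 0 <= b t) (hc_nn : forall t, 0 <= c t)
  (t0 x0 y0 z0 : R) (hx0 : 0 < x0) (hy0 : 0 < y0) (hz0 : 0 <= z0)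
  (x y z : R -> R)
  (hx_pos : forall t, 0 < x t) (hy_pos : forall t, 0 < y t)
  (hx' : forall t, is_derive x t (- (b t * x t * y t / (x t + y t))))
  (hy' : forall t, is_derive y t (b t * x t * y t / (x t + y t) - c t * y t))
  (hz' : forall t, is_derive z t (c t * y t))
  (hxt0 : x t0 = x0) (hyt0 : y t0 = y0) (hzt0 : z t0 = z0) :
  let N := x0 + y0 + z0 in
  let kappa := y0 / x0 in
  forall t : R,
    x t = x0 * exp (- kappa * RInt (fun s =>
              b s * / (kappa + exp (RInt (fun tau => c tau - b tau) t0 s))) t0 t)
    /\ y t = y0 * exp (RInt (fun s =>
              b s * / (1 + kappa * exp (RInt (fun tau => b tau - c tau) t0 s)) - c s) t0 t)
    /\ z t = N - (y0 * exp (RInt (fun s => b s - c s) t0 t) + x0)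
              * exp (- kappa * RInt (fun s =>
                  b s * / (kappa + exp (RInt (fun tau => c tau - b tau) t0 s))) t0 t).
Proof.
  intros N kappa.
  assert (HN : N = x0 + y0 + z0) by reflexivity.
  assert (Hk : kappa = y0 / x0) by reflexivity.
  clearbody N kappa.
  assert (Hkp : 0 < kappa) by (rewrite Hk; apply Rdiv_lt_0_compat; auto).
  pose (F := fun s => RInt (fun tau => b tau - c tau) t0 s).
  pose (e := fun s => RInt (fun tau => c tau - b tau) t0 s).
  assert (HF : forall s, is_derive F s (b s - c s)).
  { apply deriv_int. intros; apply cminus; auto. }
  assert (He : forall s, is_derive e s (c s - b s)).
  { apply deriv_int. intros; apply cminus; auto. }
  assert (He0 : e t0 = 0) by (unfold e; rewrite RInt_point; reflexivity).
  assert (HF0 : F t0 = 0) by (unfold F; rewrite RInt_point; reflexivity).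
  assert (HeF : forall s, e s = - F s).
  { intros s. assert (H := const0 (fun s => e s + F s)).
    assert (H0 : e s + F s = e t0 + F t0).
    { apply H. intros t. replace 0 with ((c t - b t) + (b t - c t)) by ring.
      apply (is_derive_plus e F); auto. }
    rewrite He0, HF0 in H0. lra. }
  assert (Hq : forall t, y t * exp (e t) = kappa * x t).
  { intros t.
    assert (H := const0 (fun t => y t / x t * exp (e t))).
    assert (H0 : y t / x t * exp (e t) = y t0 / x t0 * exp (e t0)).
    { apply H. intros s.
      assert (Hd := dmult _ _ s _ _ (is_derive_div y x s _ _ (hy' s) (hx' s) ltac:(specialize (hx_pos s); lra))
                          (dexp e s _ (He s))).
      eapply dreplace; [exact Hd|]. simpl.
      specialize (hx_pos s); specialize (hy_pos s). field. lra. }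
    rewrite He0, exp_0, hxt0, hyt0, <- Hk in H0.
    specialize (hx_pos t).
    replace (y t * exp (e t)) with (y t / x t * exp (e t) * x t) by (field; lra).
    rewrite H0. ring. }
  assert (HeE : forall s, exp (F s) = / exp (e s)).
  { intros s; rewrite HeF, exp_Ropp, Rinv_inv; reflexivity. }
  pose (g := fun s => b s * / (kappa + exp (e s))).
  assert (Hgc : forall s, continuous g s).
  { intros s; apply cmult; auto. apply continuous_Rinv_comp.
    - apply cplus; [apply ccst|]. apply continuous_exp_comp. exact (dcont e s _ (He s)).
    - pose proof (exp_pos (e s)); lra. }
  pose (I := fun t => RInt g t0 t).
  assert (HI : forall s, is_derive I s (g s)) by (apply deriv_int; auto).
  assert (HI0 : I t0 = 0) by (unfold I; rewrite RInt_point; reflexivity).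
  assert (Hx : forall t, x t = x0 * exp (- kappa * I t)).
  { intros t.
    assert (H0 : x t * exp (kappa * I t) = x t0 * exp (kappa * I t0)).
    { apply (const0 (fun t => x t * exp (kappa * I t))). intros s.
      assert (Hd := dmult _ _ s _ _ (hx' s) (dexp (fun t => kappa * I t) s _ (is_derive_scal I s kappa _ (HI s)))).
      eapply dreplace; [exact Hd|]. cbv beta. unfold g.
      pose proof (Hq s) as Hqs.
      specialize (hx_pos s); specialize (hy_pos s). pose proof (exp_pos (e s)).
      assert (Hk' : kappa = y s * exp (e s) / x s) by (rewrite Hqs; field; lra).
      rewrite Hk'.
      assert (y s * exp (e s) / x s + exp (e s) <> 0).
      { assert (0 < y s * exp (e s) / x s) by (apply Rdiv_lt_0_compat; [apply Rmult_lt_0_compat|]; lra). lra. }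
      field. split; [lra|]. split; [|lra].
      replace (y s * exp (e s) + exp (e s) * x s) with ((y s * exp (e s) / x s + exp (e s)) * x s) by (field; lra).
      apply Rmult_integral_contrapositive; split; lra. }
    rewrite HI0, Rmult_0_r, exp_0, Rmult_1_r, hxt0 in H0.
    replace (- kappa * I t) with (- (kappa * I t)) by ring.
    rewrite exp_Ropp, <- H0. field. apply Rgt_not_eq, exp_pos. }
  pose (h := fun s => b s * / (1 + kappa * exp (F s)) - c s).
  assert (Hhc : forall s, continuous h s).
  { intros s; apply cminus; auto. apply cmult; auto. apply continuous_Rinv_comp.
    - apply cplus; [apply ccst|]. apply cmult; [apply ccst|].
      apply continuous_exp_comp. exact (dcont F s _ (HF s)).
    - pose proof (exp_pos (F s)). assert (0 < kappa * exp (F s)) by (apply Rmult_lt_0_compat; lra). lra. }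
  pose (H := fun t => RInt h t0 t).
  assert (HH : forall s, is_derive H s (h s)) by (apply deriv_int; auto).
  assert (HH0 : H t0 = 0) by (unfold H; rewrite RInt_point; reflexivity).
  assert (Hy : forall t, y t = y0 * exp (H t)).
  { intros t.
    assert (H0 : y t / exp (H t) = y t0 / exp (H t0)).
    { apply (const0 (fun t => y t / exp (H t))). intros s.
      assert (Hd := is_derive_div _ _ s _ _ (hy' s) (dexp H s _ (HH s)) (Rgt_not_eq _ _ (exp_pos _))).
      eapply dreplace; [exact Hd|]. cbv beta. unfold h.
      pose proof (Hq s) as Hqs. rewrite (HeE s).
      specialize (hx_pos s); specialize (hy_pos s). pose proof (exp_pos (e s)).
      pose proof (exp_pos (H s)).
      assert (Hk' : kappa = y s * exp (e s) / x s) by (rewrite Hqs; field; lra).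
      rewrite Hk'.
      field. repeat split; try lra. }
    rewrite HH0, exp_0, Rdiv_1_r, hyt0 in H0.
    rewrite <- H0. field. apply Rgt_not_eq, exp_pos. }
  assert (Hw : forall t, x t + y t + z t = N).
  { intros t. rewrite HN, <- hxt0, <- hyt0, <- hzt0.
    apply (const0 (fun t => x t + y t + z t)). intros s.
    assert (Hd := is_derive_plus _ _ s _ _ (is_derive_plus _ _ s _ _ (hx' s) (hy' s)) (hz' s)).
    eapply dreplace; [exact Hd|]. cbv beta. unfold plus; simpl. ring. }
  intros t.
  change (x t = x0 * exp (- kappa * I t) /\ y t = y0 * exp (H t) /\          z t = N - (y0 * exp (F t) + x0) * exp (- kappa * I t)).
  split; [apply Hx|]. split; [apply Hy|].
  assert (Hyx : y t = kappa * x t * exp (F t)).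
  { rewrite HeE, <- Hq. field. apply Rgt_not_eq, exp_pos. }
  pose proof (Hw t) as Hwt. rewrite Hyx, Hx in Hwt. 
  rewrite <- Hwt. subst kappa. field. lra.
Qed.
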